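(* Let $(X,\sigma,\tau)$ be a separable, chronologically dense Lorentzian metric space satisfying the S-property. Then for all $(P,F),(P',F')\in\overline{X}$, $$\overline{\tau}((P,F),(P',F'))>0\iff F\cap P'\neq\emptyset.$$
   Context: A Lorentzian metric space $(X,\sigma,\tau)$ is a topological space with $\tau:X\times X\to[0,\infty]$ lower semicontinuous and satisfying $\tau(x,z)\geq\tau(x,y)+\tau(y,z)$ whenever $\tau(x,y),\tau(y,z)>0$. Write $x\ll y$ iff $\tau(x,y)>0$, $I^+(x)=\{y:x\ll y\}$, $I^-(x)=\{y:y\ll x\}$, $I^\pm[A]=\bigcup_{a\in A}I^\pm(a)$. Future (resp. past) chain: $x_n\ll x_{n+1}$ (resp. $x_{n+1}\ll x_n$) for all $n$. Separable: there is a countable $S$ with $x\ll y\Rightarrow\exists s\in S$, $x\ll s\ll y$. Chronologically dense: every $x$ with $I^-(x)\neq\emptyset$ (resp. $I^+(x)\neq\emptyset$) is the $\sigma$-limit of a future (resp. past) chain. Past set: $P=I^-[P]$; $\downarrow S=I^-[\{p:p\ll q\ \forall q\in S\}]$; IP: past set not the union of two proper past subsets; PIP: IP of the form $I^-(p)$; future sets, $\uparrow S$, IF, PIF dually. For nonempty IP $P$ and IF $F$, $P\sim_S F$ iff $P$ is a maximal IP in $\downarrow F$ and $F$ a maximal IF in $\uparrow P$; $P\sim_S\emptyset$ (resp. $\emptyset\sim_S F$) if the nonempty $P$ (resp. $F$) is S-related to no nonempty IF (resp. IP). S-property: for every $x$, $I^-(x)\sim_S I^+(x)$, and no PIF other than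 $I^+(x)$ (resp. PIP other than $I^-(x)$) is S-related to $I^-(x)$ (resp. $I^+(x)$). c-completion $\overline X=\{(P,F):P\sim_S F\}$. $\overline\tau((P,F),(P',F'))=0$ if $F=\emptyset$ or $P'=\emptyset$, and otherwise $\lim_n\tau(q_n,p'_n)$ for any past chain $\{q_n\}$ with $I^+[\{q_n\}]=F$ and any future chain $\{p'_n\}$ with $I^-[\{p'_n\}]=P'$ (well defined). *)

(* Defs.v *)
From HB Require Import structures.
From mathcomp Require Import all_boot all_order all_algebra.
From mathcomp Require Import all_classical all_reals all_analysis.
Set Implicit Arguments. Unset Strict Implicit. Unset Printing Implicit Defensive.
Import Order.TTheory GRing.Theory Num.Theory.
Local Open Scope classical_set_scope.
Local Open Scope ereal_scope.

Section LMS.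
Context {R : realType} {T : topologicalType} (tau : T -> T -> \bar R).

Definition lorentzian_metric : Prop :=
  (forall x y, 0 <= tau x y) /\
  lower_semicontinuous (fun xy : T * T => tau xy.1 xy.2) /\
  (forall x y z, 0 < tau x y -> 0 < tau y z -> tau x y + tau y z <= tau x z).

Definition chron (x y : T) : Prop := 0 < tau x y.

Definition Ifut (x : T) : set T := [set y | chron x y].
Definition Ipast (x : T) : set T := [set y | chron y x].
Definition Ifut_set (A : set T) : set T := [set y | exists2 a, A a & chron a y].
Definition Ipast_set (A : set T) : set T := [set y | exists2 a, A a & chron y a].

Definition future_chain (s : nat -> T) : Prop := forall n, chron (s n) (s n.+1).
Definition past_chain (s : nat -> T) : Prop := forall n, chron (s n.+1) (s n).

Definition separable_LMS : Prop :=
  exists S : set T, countable S /\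
    forall x y, chron x y -> exists2 s, S s & chron x s /\ chron s y.

Definition chron_dense : Prop :=
  (forall x, Ipast x !=set0 ->
     exists s : nat -> T, future_chain s /\ (s @ \oo --> x)) /\
  (forall x, Ifut x !=set0 ->
     exists s : nat -> T, past_chain s /\ (s @ \oo --> x)).

Definition past_set (P : set T) : Prop := P = Ipast_set P.
Definition future_set (F : set T) : Prop := F = Ifut_set F.

Definition down (S : set T) : set T :=
  Ipast_set [set p | forall q, S q -> chron p q].
Definition up (S : set T) : set T :=
  Ifut_set [set p | forall q, S q -> chron q p].

Definition IP (P : set T) : Prop :=
  P !=set0 /\ past_set P /\
  ~ (exists P1 P2, past_set P1 /\ past_set P2 /\ P1 `<` P /\ P2 `<` P /\
                   P = P1 `|` P2).
Definition IF (F : set T) : Prop :=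
  F !=set0 /\ future_set F /\
  ~ (exists F1 F2, future_set F1 /\ future_set F2 /\ F1 `<` F /\ F2 `<` F /\
                   F = F1 `|` F2).

Definition PIP (P : set T) : Prop := IP P /\ exists p, P = Ipast p.
Definition PIF (F : set T) : Prop := IF F /\ exists p, F = Ifut p.

Definition maximal_IP_in (P A : set T) : Prop :=
  IP P /\ P `<=` A /\ forall P', IP P' -> P `<=` P' -> P' `<=` A -> P' = P.
Definition maximal_IF_in (F A : set T) : Prop :=
  IF F /\ F `<=` A /\ forall F', IF F' -> F `<=` F' -> F' `<=` A -> F' = F.

Definition Srel_ne (P F : set T) : Prop :=
  maximal_IP_in P (down F) /\ maximal_IF_in F (up P).

Definition Srel (P F : set T) : Prop :=
  Srel_ne P F \/
  (F = set0 /\ IP P /\ forall F', IF F' -> ~ Srel_ne P F') \/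
  (P = set0 /\ IF F /\ forall P', IP P' -> ~ Srel_ne P' F).

Definition S_property : Prop :=
  forall x, Srel (Ipast x) (Ifut x) /\
    (forall y, PIF (Ifut y) -> Srel (Ipast x) (Ifut y) -> Ifut y = Ifut x) /\
    (forall y, PIP (Ipast y) -> Srel (Ipast y) (Ifut x) -> Ipast y = Ipast x).

Definition c_completion (PF : set T * set T) : Prop := Srel PF.1 PF.2.

Definition taubar_chains (F P' : set T) (qp : (nat -> T) * (nat -> T)) : Prop :=
  past_chain qp.1 /\ Ifut_set (range qp.1) = F /\
  future_chain qp.2 /\ Ipast_set (range qp.2) = P'.

Definition taubar (PF PF' : set T * set T) : \bar R :=
  match pselect (PF.2 = set0 \/ PF'.1 = set0) with
  | left _ => 0
  | right _ =>
    match pselect (exists qp, taubar_chains PF.2 PF'.1 qp) with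
    | left h => let qp := projT1 (cid h) in
                limn (fun n => tau (qp.1 n) (qp.2 n))
    | right _ => 0
    end
  end.

End LMS.

(* Main.v *)
Require Import Defs.
From HB Require Import structures.
From mathcomp Require Import all_boot all_order all_algebra.
From mathcomp Require Import all_classical all_reals all_analysis.
Import Order.TTheory GRing.Theory Num.Theory.
Local Open Scope classical_set_scope.
Local Open Scope ereal_scope.

Section Aux.
Context {R : realType} {T : topologicalType} (tau : T -> T -> \bar R).
Hypothesis tau_ge0 : forall x y, 0 <= tau x y.
Hypothesis tri : forall {x y z}, 0 < tau x y -> 0 < tau y z -> tau x y + tau y z <= tau x z.

Lemma chron_trans {x y z} : chron tau x y -> chron tau y z -> chron tau x z.
Proof. rewrite /chron => h1 h2; exact: (lt_le_trans (adde_gt0 h1 h2) (tri h1 h2)). Qed.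

Hypothesis S : set T.
Hypothesis Sc : countable S.
Hypothesis interp : forall {x y}, chron tau x y -> exists2 s, S s & chron tau x s /\ chron tau s y.

Lemma Ipast_set_past A : past_set tau (Ipast_set tau A).
Proof.
rewrite /past_set; apply/seteqP; split => w.
- case=> a Aa wa. have [s _ [ws sa]] := interp wa. exists s => //. by exists a.
- case=> u [a Aa ua] wu. exists a => //. exact: chron_trans wu ua.
Qed.

Lemma IP_directed P : IP tau P -> forall x y, P x -> P y ->
  exists z, P z /\ chron tau x z /\ chron tau y z.
Proof.
move=> [_ [Pp nodec]] x y Px Py. apply: contrapT => hC. apply: nodec.
have sub : forall A, A `<=` P -> Ipast_set tau A `<=` P.
  move=> A AP w [a Aa wa]; rewrite Pp; exists a; [exact: AP|done].
exists (Ipast_set tau (P `\` Ifut tau x)), (Ipast_set tau (P `\` Ifut tau y)).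
split; first exact: Ipast_set_past. split; first exact: Ipast_set_past.
split. split; first by apply: sub => w [].
  move=> /(_ x Px) [a [Pa nxa] xa]. exact: nxa.
split. split; first by apply: sub => w [].
  move=> /(_ y Py) [a [Pa nxa] xa]. exact: nxa.
apply/seteqP; split; last by move=> w [] ; apply: sub => ? [].
move=> w Pw. rewrite Pp in Pw. case: Pw => v Pv wv.
case: (pselect (Ifut tau x v)) => hx; last by left; exists v.
case: (pselect (Ifut tau y v)) => hy; last by right; exists v.
by exfalso; apply: hC; exists v.
Qed.

Lemma IP_chain P : IP tau P ->
  exists s : nat -> T, future_chain tau s /\ Ipast_set tau (range s) = P.
Proof.
move=> IPP; have [[w0 Pw0] [Pp _]] := IPP.
have cof : forall w, P w -> exists2 s, (P `&` S) s & chron tau w s.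
  move=> w Pw; rewrite Pp in Pw; case: Pw => v Pv wv.
  have [s Ss [ws sv]] := interp wv; exists s => //; split => //.
  by rewrite Pp; exists v.
have PSc : countable (P `&` S).
  apply: (sub_countable _ Sc); apply: subset_card_le; exact: subIsetr.
have [PS0|] := pfcard_geP PSc.
  have [s PSs _] := cof w0 Pw0. by rewrite PS0 in PSs.
move=> /surjfunPex [e He].
have eP : forall n, P (e n).
  move=> n; have : (P `&` S) (e n) by rewrite He; exists n.
  by case.
pose g x y := if pselect (exists z, P z /\ chron tau x z /\ chron tau y z) is left h
  then projT1 (cid h) else x.
have gP : forall x y, P x -> P y -> P (g x y) /\ chron tau x (g x y) /\ chron tau y (g x y).
  move=> x y Px Py; rewrite /g; case: pselect => h; last first.
    by exfalso; apply: h; exact: IP_directed.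
  exact: (projT2 (cid h)).
pose fix q n := if n is m.+1 then g (q m) (e m.+1) else g (e 0%N) (e 0%N).
have qP : forall n, P (q n) /\ chron tau (e n) (q n).
  elim=> [|n [IH _]] /=; first by have [? [? ?]] := gP _ _ (eP 0%N) (eP 0%N).
  by have [? [? ?]] := gP _ _ IH (eP n.+1).
exists q; split.
  move=> n /=. have [? [? ?]] := gP _ _ (proj1 (qP n)) (eP n.+1). done.
apply/seteqP; split.
  move=> w [_ [n _ <-] wq]; rewrite Pp; exists (q n) => //; exact: (proj1 (qP n)).
move=> w Pw; have [s PSs ws] := cof w Pw.
have : (e @` setT) s by rewrite -He.
case=> n _ ens; exists (q n); first by exists n.
apply: chron_trans ws _; rewrite -ens; exact: (proj2 (qP n)).
Qed.


Lemma chain_limit (q p : nat -> T) : past_chain tau q -> future_chain tau p ->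
  (0 < limn (fun n => tau (q n) (p n)) <->
   Ifut_set tau (range q) `&` Ipast_set tau (range p) !=set0).
Proof.
move=> hq hp; set u := (fun n => tau (q n) (p n)).
have qm : forall i m, (i <= m)%N -> forall y, chron tau (q i) y -> chron tau (q m) y.
  move=> i; elim=> [|m IH]; first by rewrite leqn0 => /eqP ->.
  rewrite leq_eqVlt => /orP [/eqP <-|] // /IH h y /h hy.
  exact: chron_trans (hq m) hy.
have pm : forall j m, (j <= m)%N -> forall y, chron tau y (p j) -> chron tau y (p m).
  move=> j; elim=> [|m IH]; first by rewrite leqn0 => /eqP ->.
  rewrite leq_eqVlt => /orP [/eqP <-|] // /IH h y /h hy.
  exact: chron_trans hy (hp m).
have nd : nondecreasing_seq u.
  apply/nondecreasing_seqP => n.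
  have [h|h] := leP (u n) 0; first exact: le_trans h (tau_ge0 _ _).
  have h1 := tri (hq n) h.
  have h2 : chron tau (q n.+1) (p n) := chron_trans (hq n) h.
  have h3 := tri h2 (hp n).
  apply: le_trans h3; apply: lee_paddr; first exact: tau_ge0.
  apply: le_trans h1; apply: lee_paddl => //; exact: tau_ge0.
have -> : limn u = ereal_sup (range u).
  apply: cvg_lim => //; exact: ereal_nondecreasing_cvgn.
split.
  move=> /ereal_sup_gt [y [n _ <-] hy].
  exists (q n); split; first by exists (q n.+1) => //; exists n.+1.
  by exists (p n) => //; exists n.
case=> x [[a [i _ <-] qx] [b [j _ <-] xp]].
have hm : 0 < u (maxn i j).
  apply: (qm i); first exact: leq_maxl.
  apply: (pm j); first exact: leq_maxr.
  exact: chron_trans qx xp.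
apply: (lt_le_trans hm); apply: ereal_sup_ubound; by exists (maxn i j).
Qed.

End Aux.


Theorem mainTheorem16 (R : realType) (T : topologicalType) (tau : T -> T -> \bar R) :
  lorentzian_metric tau -> separable_LMS tau -> chron_dense tau -> S_property tau ->
  forall PF PF' : set T * set T,
    c_completion tau PF -> c_completion tau PF' ->
    (0 < taubar tau PF PF' <-> PF.2 `&` PF'.1 !=set0).
Proof.
move=> [tge0 [_ tri]] [S [Sc sep]] _ _ [P F] [P' F'] /= hPF hPF'.
rewrite /taubar /=.
case: pselect => [h0|h0].
  split; first by rewrite ltxx.
  move=> [x [Fx P'x]]; case: h0 => h; [rewrite h in Fx|rewrite h in P'x]; done.
have Fne : F !=set0.
  apply/set0P/eqP => h; apply: h0; by left.
have P'ne : P' !=set0.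
  apply/set0P/eqP => h; apply: h0; by right.
have hF : IF tau F.
  case: hPF => [[_ [hF _]] | [[Fe _] | [_ [hF _]]]] //.
  by exfalso; move: Fne; rewrite /= in Fe; rewrite Fe => -[].
have hP : IP tau P'.
  case: hPF' => [[[hP _] _] | [[_ [hP _]] | [Pe _]]] //.
  by exfalso; move: P'ne; rewrite /= in Pe; rewrite Pe => -[].
have [p [hp hpP]] := @IP_chain R T tau tri S Sc sep P' hP.
pose tau' := fun x y => tau y x.
have tri' : forall x y z, 0 < tau' x y -> 0 < tau' y z -> tau' x y + tau' y z <= tau' x z.
  by move=> x y z h1 h2; rewrite /tau' addeC; exact: tri.
have sep' : forall x y, chron tau' x y -> exists2 s, S s & chron tau' x s /\ chron tau' s y.
  move=> x y h; have [s Ss [h1 h2]] := sep y x h; by exists s.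
have [q [hq hqF]] := @IP_chain R T tau' tri' S Sc sep' F hF.
case: pselect => [h|h]; last first.
  by exfalso; apply: h; exists (q, p); split.
case: (cid h) => -[q' p'] [h1 [h2 [h3 h4]]] /=.
rewrite -h2 -h4.
exact: chain_limit.
Qed.
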